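(* The space of increasing normalized submodular setfunctions on Borel spaces, endowed with the pseudometric $d(\varphi_1,\varphi_2)=\sum_{k=1}^\infty 2^{-k}d_H^{(k)}(Q_k(\varphi_1),Q_k(\varphi_2))$, is compact.
   Context: A setfunction on a set-algebra $(J,\mathcal{B})$ is a map $\varphi\colon\mathcal{B}\to\mathbb{R}$ with $\varphi(\emptyset)=0$; on a Borel space, $\mathcal{B}$ is the Borel sigma-algebra. It is increasing if $X\subseteq Y$ implies $\varphi(X)\le\varphi(Y)$, submodular if $\varphi(X)+\varphi(Y)\ge\varphi(X\cap Y)+\varphi(X\cup Y)$, and normalized means taking values in $[0,1]$. For $k\in\mathbb{N}$ and a map $F\colon J\to[k]$ with $F^{-1}(i)\in\mathcal{B}$, the quotient $\varphi\circ F^{-1}$ is $A\mapsto\varphi(F^{-1}(A))$ on $2^{[k]}$; $Q_k(\varphi)\subseteq\mathbb{R}^{2^k}$ is the set of all such quotients. $d_H^{(k)}$ is the Hausdorff distance on subsets of Euclidean $\mathbb{R}^{2^k}$. *)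

(* Defs.v *)
From HB Require Import structures.
From mathcomp Require Import all_boot all_order all_algebra.
From mathcomp Require Import all_classical all_reals all_analysis.
Unset Implicit Arguments. Unset Printing Implicit Defensive.
Import Order.TTheory GRing.Theory Num.Theory.
Import numFieldNormedType.Exports.
Local Open Scope classical_set_scope.
Local Open Scope ring_scope.

(* A (standard) Borel space: a Polish space (separable, complete metric,
   Hausdorff) together with its Borel sigma-algebra. *)
Set Implicit Arguments.
Record borel_space (R : realType) := BorelSpace {
  bs_T :> pseudoMetricType R;
  bs_hausdorff : hausdorff_space bs_T;
  bs_complete : forall F : set_system bs_T,
      ProperFilter F -> cauchy F -> exists x : bs_T, F --> x;
  bs_separable : exists D : set bs_T, countable D /\ dense D }.
Unset Implicit Arguments.

Definition borel {R : realType} {J : borel_space R} (A : set J) : Prop :=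
  <<s [set: J], @open J >> A.

(* A setfunction on (J, Borel(J)) is represented as a total map on subsets
   of J; only its values on Borel sets matter. *)
Definition setfun {R : realType} (J : borel_space R) := set J -> R.

Definition increasing {R : realType} {J : borel_space R} (phi : setfun J) :=
  forall X Y, borel X -> borel Y -> X `<=` Y -> phi X <= phi Y.

Definition submodular {R : realType} {J : borel_space R} (phi : setfun J) :=
  forall X Y, borel X -> borel Y ->
    phi (X `&` Y) + phi (X `|` Y) <= phi X + phi Y.

Definition normalized {R : realType} {J : borel_space R} (phi : setfun J) :=
  forall X, borel X -> 0 <= phi X <= 1.

Definition inc_norm_submod {R : realType} {J : borel_space R} (phi : setfun J) :=
  [/\ phi set0 = 0, increasing phi, submodular phi & normalized phi].

(* Quotients: points of R^{2^k} are maps {set 'I_k} -> R. *)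
Definition quotient_of {R : realType} {J : borel_space R} (phi : setfun J)
    {k : nat} (F : J -> 'I_k) : {set 'I_k} -> R :=
  fun A => phi (F @^-1` [set i | i \in A]).

Definition Qk {R : realType} {J : borel_space R} (phi : setfun J) (k : nat)
    : set ({set 'I_k} -> R) :=
  [set quotient_of phi F | F in
     [set F : J -> 'I_k | forall i : 'I_k, borel (F @^-1` [set i])]].

Definition edist {R : realType} {k : nat} (x y : {set 'I_k} -> R) : R :=
  Num.sqrt (\sum_(A : {set 'I_k}) (x A - y A) ^+ 2).

Definition dH {R : realType} {k : nat} (X Y : set ({set 'I_k} -> R)) : R :=
  Num.max (sup [set inf [set edist x y | y in Y] | x in X])
          (sup [set inf [set edist x y | x in X] | y in Y]).

Definition dist_sf {R : realType} {J1 J2 : borel_space R}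
    (phi1 : setfun J1) (phi2 : setfun J2) : R :=
  limn (fun n => \sum_(1 <= k < n) ((2 ^- k : R) * dH (Qk phi1 k) (Qk phi2 k))).

(* Main.v *)
Require Import Defs.
From HB Require Import structures.
From mathcomp Require Import all_boot all_order all_algebra.
From mathcomp Require Import all_classical all_reals all_analysis.
From mathcomp Require Import lra ring.
Import Order.TTheory GRing.Theory Num.Theory.
Import numFieldNormedType.Exports.
Local Open Scope classical_set_scope.
Local Open Scope ring_scope.
Section BorelFacts.
Context {R : realType} {J : borel_space R}.

Lemma borel0 : borel (set0 : set J).
Proof. exact: sigma_algebra0. Qed.

Lemma borelC (A : set J) : borel A -> borel (~` A).
Proof. by move=> hA; rewrite -setTD; apply: sigma_algebraCD. Qed.

Lemma borelT : borel (setT : set J).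
Proof. by rewrite -setC0; apply: borelC; exact: borel0. Qed.

Lemma borel_bigcup (A : nat -> set J) : (forall i, borel (A i)) -> borel (\bigcup_i A i).
Proof. exact: sigma_algebra_bigcup. Qed.

Lemma borelU (A B : set J) : borel A -> borel B -> borel (A `|` B).
Proof.
move=> hA hB; rewrite -bigcup2E; apply: borel_bigcup => i.
by rewrite /bigcup2; case: ifP => _ //; case: ifP => _ //; exact: borel0.
Qed.

Lemma borelI (A B : set J) : borel A -> borel B -> borel (A `&` B).
Proof.
move=> hA hB; rewrite -[A `&` B]setCK setCI; apply: borelC.
by apply: borelU; apply: borelC.
Qed.

Lemma borel_open (A : set J) : open A -> borel A.
Proof. by move=> oA; apply: sub_sigma_algebra. Qed.


Definition fib_borel {T : countType} (f : J -> T) := forall t, borel (f @^-1` [set t]).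

Lemma preimage_borel {T : countType} (f : J -> T) (P : set T) :
  fib_borel f -> borel (f @^-1` P).
Proof.
move=> hf.
have -> : f @^-1` P = \bigcup_j (match (unpickle j : option T) with
    Some t => if `[< P t >] then f @^-1` [set t] else set0 | None => set0 end).
  apply/seteqP; split => [x /= Px|x [j _]].
    exists (pickle (f x)) => //; rewrite pickleK.
    by case: asboolP.
  case: (unpickle j) => [t|] //.
  by case: asboolP => // Pt /= ->.
apply: borel_bigcup => j; case: (unpickle j) => [t|]; last exact: borel0.
by case: asboolP => _; [exact: hf|exact: borel0].
Qed.

Lemma fib_borel_comp {T T' : countType} (f : J -> T) (g : T -> T') :
  fib_borel f -> fib_borel (g \o f).
Proof. by move=> hf t; exact (preimage_borel f (g @^-1` [set t]) hf). Qed.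

Lemma fib_borel_pair {T T' : countType} (f : J -> T) (g : J -> T') :
  fib_borel f -> fib_borel g -> fib_borel (fun x => (f x, g x)).
Proof.
move=> hf hg [u v].
have -> : (fun x => (f x, g x)) @^-1` [set (u, v)] =
   f @^-1` [set u] `&` g @^-1` [set v].
  by apply/seteqP; split => x /=; [case=> -> ->|case=> -> ->].
exact: borelI.
Qed.

Lemma fib_borel_cst {T : countType} (c : T) : fib_borel (fun _ : J => c).
Proof.
move=> t; case: (pselect (c = t)) => [<-|ne].
  have -> : (fun _ : J => c) @^-1` [set c] = setT by apply/seteqP; split.
  exact: borelT.
have -> : (fun _ : J => c) @^-1` [set t] = set0 by apply/seteqP; split => x //=.
exact: borel0.
Qed.

Lemma fib_borel_seq (labs : nat -> J -> nat) (s : seq nat) :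
  (forall t, fib_borel (labs t)) -> fib_borel (fun x => [seq labs t x | t <- s]).
Proof.
move=> hl; elim: s => [|a s IH] /=; first exact: (fib_borel_cst [::]).
have := fib_borel_comp _ (fun p : nat * seq nat => p.1 :: p.2) (fib_borel_pair _ _ (hl a) IH).
by apply.
Qed.

End BorelFacts.
Definition Rbs (R : realType) : borel_space R.
Proof.
refine (@BorelSpace R R (@Rhausdorff R) _ _).
- by move=> F PF cF; exists (lim F); apply: cauchy_cvg.
- exists (range ratr); split; last exact: dense_rat.
  exact: (sub_countable (card_image_le _ _) (countableP _)).
Defined.
Section Metric.
Context {R : realType} {k : nat}.
Implicit Types (x y : {set 'I_k} -> R) (X Y : set ({set 'I_k} -> R)).

Definition closeq (eta : R) x y := forall A, `|x A - y A| <= eta.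

Lemma close_sym eta x y : closeq eta x y -> closeq eta y x.
Proof. by move=> h A; rewrite distrC. Qed.

Lemma close_trans e1 e2 x y z : closeq e1 x y -> closeq e2 y z -> closeq (e1 + e2) x z.
Proof.
move=> h1 h2 A; rewrite (_ : x A - z A = (x A - y A) + (y A - z A)); last by rewrite addrA subrK.
by apply: le_trans (ler_normD _ _) _; apply: lerD.
Qed.

Lemma card_setk : #|{set 'I_k}| = (2 ^ k)%N.
Proof. by rewrite -cardsT -powersetT card_powerset cardsT card_ord. Qed.

Lemma edist_ge0 x y : 0 <= Defs.edist x y.
Proof. exact: sqrtr_ge0. Qed.

Lemma edist_le eta x y : 0 <= eta -> closeq eta x y ->
  Defs.edist x y <= Num.sqrt (2 ^ k)%:R * eta.
Proof.
move=> e0 h; rewrite /Defs.edist -(ger0_norm e0) -sqrtr_sqr -sqrtrM; last by rewrite ler0n.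
apply: ler_wsqrtr; rewrite mulr_natl -card_setk -sumr_const.
apply: ler_sum => A _; rewrite -real_normK ?num_real //.
by apply: lerXn2r; rewrite ?nnegrE ?normr_ge0 ?h.
Qed.

Lemma sup_ge0_all (E : set R) : (forall r, E r -> 0 <= r) -> 0 <= sup E.
Proof.
move=> h; case: (pselect (has_sup E)) => [[[r Er] ub]|ns]; last by rewrite sup_out.
by apply: le_trans (h r Er) _; apply: ub_le_sup.
Qed.

Lemma inf_ge0_all (E : set R) : (forall r, E r -> 0 <= r) -> 0 <= inf E.
Proof.
move=> h; case: (pselect (E !=set0)) => [ne|e0]; first by apply: lb_le_inf.
have -> : E = set0 by apply/seteqP; split => r // Er; apply: e0; exists r.
by rewrite inf0.
Qed.

Lemma dH_ge0 X Y : 0 <= dH X Y.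
Proof.
rewrite /dH le_max; apply/orP; left; apply: sup_ge0_all => _ [x Xx <-].
by apply: inf_ge0_all => _ [y Yy <-]; exact: edist_ge0.
Qed.

Lemma sup_inf_le (X Y : set ({set 'I_k} -> R)) (d : ({set 'I_k} -> R) -> ({set 'I_k} -> R) -> R) B :
  0 <= B -> (forall x y, 0 <= d x y) ->
  (forall x, X x -> exists2 y, Y y & d x y <= B) ->
  sup [set inf [set d x y | y in Y] | x in X] <= B.
Proof.
move=> B0 d0 h; case: (pselect ([set inf [set d x y | y in Y] | x in X] !=set0)) => [ne|e0].
  apply: ge_sup => // _ [x Xx <-]; have [y Yy dB] := h x Xx.
  apply: le_trans dB; apply: ge_inf; last by exists y.
  by exists 0 => _ [z _ <-].
have -> : [set inf [set d x y | y in Y] | x in X] = set0.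
  by apply/seteqP; split => r // Er; apply: e0; exists r.
by rewrite sup0.
Qed.

Lemma dH_le X Y eta : 0 <= eta ->
  (forall x, X x -> exists2 y, Y y & closeq eta x y) ->
  (forall y, Y y -> exists2 x, X x & closeq eta y x) ->
  dH X Y <= Num.sqrt (2 ^ k)%:R * eta.
Proof.
move=> e0 h1 h2; have B0 : 0 <= Num.sqrt (2 ^ k)%:R * eta by rewrite mulr_ge0 ?sqrtr_ge0.
rewrite /dH ge_max; apply/andP; split.
  apply: sup_inf_le => // [x y|x Xx]; first exact: edist_ge0.
  by have [y Yy c] := h1 x Xx; exists y => //; apply: edist_le.
refine (@sup_inf_le Y X (fun y x => Defs.edist x y) _ B0 (fun y x => edist_ge0 x y) _) => y Yy.
by have [x Xx c] := h2 y Yy; exists x => //; apply: edist_le => //; apply: close_sym.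
Qed.

End Metric.
Arguments close_sym {R k eta x y}.
Arguments close_trans {R k e1 e2 x y z}.

Section Ulim.
Context {R : realType} (U : set_system nat) {hU : UltraFilter U}.

Lemma ulim_ex (u : nat -> R) : (forall n, 0 <= u n <= 1) -> exists L : R, u @ U --> L.
Proof.
move=> hu.
have [L [_ cl]] : `[(0:R), 1] `&` @cluster R (fmap u U) !=set0.
  apply: (@segment_compact R 0 1 (fmap u U)).
  change (U (u @^-1` `[(0:R), 1])).
  by apply: filterS filterT => n _ /=; rewrite in_itv /= hu.
exists L; apply/cvgrPdist_lt => e e0.
have [//|hC] := in_ultra_setVsetC [set n | `|L - u n| < e] hU.
have [r [/= hn br]] : [set r | ~ `|L - r| < e] `&` ball L e !=set0.
  by apply: cl; [exact: hC|exact: nbhsx_ballx].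
by exfalso; apply: hn; move: br; rewrite /ball /=.
Qed.
End Ulim.

Section Sums.
Context {R : realType}.

Lemma geo_sum (C : R) (f : nat -> R) N : 0 <= C ->
  (forall k, (0 < k)%N -> f k <= C * (7/8)^+k) -> \sum_(1 <= k < N) f k <= 8 * C.
Proof.
move=> C0 hf.
have H : forall M, \sum_(1 <= k < M.+1) f k <= 8 * C - 8 * C * (7/8)^+M.+1.
  clear N; elim=> [|N IH]; first by rewrite big_geq // expr1; lra.
  rewrite big_nat_recr //=; have := hf N.+1 isT.
  rewrite [(7/8)^+N.+2]exprS; move: IH; set q := (7/8)^+N.+1 => IH hfN.
  have : C * (7 / 8 * q) = 7/8 * (C * q) by rewrite mulrCA.
  lra.
case: N => [|N]; first by rewrite big_geq //; lra.
apply: le_trans (H N) _; have : 0 <= C * (7/8)^+N.+1 by rewrite mulr_ge0 // exprn_ge0 //; lra.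
lra.
Qed.

Lemma sqrt_pow (a b : R) k : 0 <= b -> a <= b ^+ 2 -> 0 <= a -> Num.sqrt (a ^+ k) <= b ^+ k.
Proof.
move=> b0 ab a0; rewrite -[b ^+ k]ger0_norm ?exprn_ge0 // -sqrtr_sqr; apply: ler_wsqrtr.
by rewrite -exprM mulnC exprM; apply: lerXn2r; rewrite ?nnegrE ?exprn_ge0.
Qed.

Lemma term_le (b : R) k : 0 <= b -> 2 <= b ^+ 2 ->
  (2 ^- k : R) * Num.sqrt (2 ^ k)%:R <= (b / 2) ^+ k.
Proof.
move=> b0 hb; rewrite natrX; apply: (le_trans (y := 2 ^- k * b ^+ k)).
  by apply: ler_wpM2l; [rewrite invr_ge0 exprn_ge0|apply: sqrt_pow].
by rewrite -exprVn -exprMn mulrC.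
Qed.

Lemma dist_le {J1 J2 : borel_space R} (p1 : setfun J1) (p2 : setfun J2) (C : R) :
  0 <= C ->
  (forall k, (0 < k)%N -> (2 ^- k : R) * dH (Qk p1 k) (Qk p2 k) <= C * (7/8)^+k) ->
  0 <= dist_sf p1 p2 <= 8 * C.
Proof.
move=> C0 hk.
set S := fun N => \sum_(1 <= k < N) ((2 ^- k : R) * dH (Qk p1 k) (Qk p2 k)).
have a0 : forall k, 0 <= (2 ^- k : R) * dH (Qk p1 k) (Qk p2 k).
  move=> k; apply: mulr_ge0; last exact: dH_ge0.
  by rewrite invr_ge0 exprn_ge0 // ler0n.
have S0 : forall N, 0 <= S N by move=> N; apply: sumr_ge0 => k _.
have Snd : {homo S : n m / (n <= m)%N >-> n <= m}.
  move=> n m nm; rewrite /S; case: n nm => [|n] nm.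
    by rewrite big_geq //; exact: S0.
  rewrite [X in _ <= X](@big_cat_nat _ _ _ n.+1) //= lerDl; exact: sumr_ge0.
have Sub : forall N, S N <= 8 * C by move=> N; apply: geo_sum.
have hc : cvg (S @ \oo).
  apply: cvgP; apply: nondecreasing_cvgn => //.
  by exists (8 * C) => _ [N _ <-].
rewrite /dist_sf; apply/andP; split.
  by apply: limr_ge => //; apply: filterE.
by apply: limr_le => //; apply: filterE.
Qed.

End Sums.

Lemma Qk_01 {R : realType} {J : borel_space R} (ps : setfun J) (hps : inc_norm_submod ps)
  k x : Qk ps k x -> forall A, 0 <= x A <= 1.
Proof.
case=> F hF <- A; case: hps => _ _ _ hn; apply: hn.
exact: (preimage_borel F _ hF).
Qed.

Lemma grid {R : realType} (k m : nat) (x : {set 'I_k} -> R) : (forall A, 0 <= x A <= 1) ->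
  exists e : {ffun {set 'I_k} -> 'I_m.+2},
    closeq (m.+1%:R^-1) x (fun A => (e A)%:R / m.+1%:R).
Proof.
move=> hx; set M : R := m.+1%:R.
have M0 : 0 < M by rewrite ltr0n.
exists [ffun A => inord (Num.trunc (x A * M))] => A; rewrite ffunE.
have /andP[x0 x1] := hx A.
have hy : 0 <= x A * M by rewrite mulr_ge0 // ltW.
have /andP[h1 h2] := truncn_itv hy.
rewrite inordK; last first.
  rewrite ltnS -(ler_nat R); apply: le_trans h1 _.
  by rewrite -[X in _ <= X]mul1r ler_wpM2r // ltW.
move: h1 h2; set t := Num.trunc _ => h1 h2.
have -> : x A = (x A * M) / M by rewrite mulfK // gt_eqF.
have Mi : 0 <= M^-1 by rewrite invr_ge0 ltW.
rewrite -mulrBl normrM [`|M^-1|]ger0_norm //.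
rewrite -[X in _ <= X]mul1r ler_pM2r ?invr_gt0 //.
rewrite ger0_norm ?subr_ge0 // lerBlDl; apply: ltW.
by rewrite -natr1 in h2.
Qed.

Section Main.
Context {R : realType} (J : nat -> borel_space R) (phi : forall n, setfun (J n))
  (hphi : forall n, inc_norm_submod (phi n))
  (U : set_system nat) {hU : UltraFilter U} (hUoo : \oo `<=` U).

Definition yv (k m : nat) (e : {ffun {set 'I_k} -> 'I_m.+2}) : {set 'I_k} -> R :=
  fun A => (e A)%:R / m.+1%:R.

Definition dlt (m : nat) : R := m.+1%:R^-1.

Definition good n k m e (F : J n -> 'I_k.+1) :=
  fib_borel F /\ closeq (dlt m) (quotient_of (phi n) F) (yv k.+1 m e).

Definition Pn n k m e : J n -> 'I_k.+1 :=
  match pselect (exists F, good n k m e F) with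
  | left h => projT1 (cid h)
  | right _ => fun _ => ord0 end.

Lemma Pn_fib n k m e : fib_borel (Pn n k m e).
Proof.
rewrite /Pn; case: pselect => [h|_]; first by case: (projT2 (cid h)).
exact: (fib_borel_cst ord0).
Qed.

Lemma Pn_good n k m e : (exists F, good n k m e F) -> good n k m e (Pn n k m e).
Proof. by rewrite /Pn; case: pselect => // h _; exact: (projT2 (cid h)). Qed.

Definition tgt := {k : nat & {m : nat & {ffun {set 'I_k.+1} -> 'I_m.+2}}}.

Definition lab n (t : nat) (x : J n) : nat :=
  match (unpickle t : option tgt) with
  | Some (existT k (existT m e)) => val (Pn n k m e x)
  | None => 0%N end.

Lemma lab_fib n t : fib_borel (lab n t).
Proof.
rewrite /lab; case: (unpickle t : option tgt) => [[k [m e]]|]; last exact: (fib_borel_cst 0%N).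
exact: (fib_borel_comp _ val (Pn_fib n k m e)).
Qed.

Definition tg (k m : nat) (e : {ffun {set 'I_k.+1} -> 'I_m.+2}) : nat :=
  pickle (@Tagged nat k (fun k => {m : nat & {ffun {set 'I_k.+1} -> 'I_m.+2}}) (@Tagged nat m (fun m => {ffun {set 'I_k.+1} -> 'I_m.+2}) e) : tgt).

Lemma lab_tg n k m e x : lab n (tg k m e) x = val (Pn n k m e x).
Proof. by rewrite /lab /tg pickleK. Qed.

Definition code n (x : J n) : seq nat := [seq lab n t x | t <- iota 0 n].

Lemma code_fib n : fib_borel (code n).
Proof. exact: fib_borel_seq (lab_fib n). Qed.

Definition hmap n (x : J n) : Rbs R := (pickle (code n x))%:R.

Lemma hmap_borel n (X : set (Rbs R)) : borel (hmap n @^-1` X).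
Proof. exact (preimage_borel (code n) [set s | X (pickle s)%:R] (code_fib n)). Qed.

Lemma hmap_fib n {T : countType} (F : Rbs R -> T) : fib_borel (F \o hmap n).
Proof. exact: (fib_borel_comp _ (fun s => F (pickle s)%:R) (code_fib n)). Qed.

Definition seqof (X : set (Rbs R)) : nat -> R := fun n => phi n (hmap n @^-1` X).

Lemma seqof_01 X n : 0 <= seqof X n <= 1.
Proof. by case: (hphi n) => _ _ _ hn; apply: hn; apply: hmap_borel. Qed.

Definition phi0 : setfun (Rbs R) := fun X => lim (seqof X @ U).

Lemma phi0_cvg X : seqof X @ U --> phi0 X.
Proof.
have [L hL] := @ulim_ex R U hU (seqof X) (seqof_01 X).
by rewrite /phi0 (cvg_lim (@Rhausdorff R) hL).
Qed.

Lemma phi0_ins : inc_norm_submod phi0.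
Proof.
split.
- rewrite /phi0; have -> : seqof set0 = fun=> 0.
    by apply/funext => n; rewrite /seqof preimage_set0; case: (hphi n).
  exact: (cvg_lim (@Rhausdorff R) (cvg_cst 0)).
- move=> X Y _ _ XY; apply: (ler_cvg_to (phi0_cvg X) (phi0_cvg Y)).
  apply: filterE => n; case: (hphi n) => _ hi _ _; apply: hi; try exact: hmap_borel.
  by apply: preimage_subset.
- move=> X Y _ _; apply: (ler_cvg_to (cvgD (phi0_cvg (X `&` Y)) (phi0_cvg (X `|` Y)))
     (cvgD (phi0_cvg X) (phi0_cvg Y))).
  apply: filterE => n /=; case: (hphi n) => _ _ hs _.
  change (phi n (hmap n @^-1` (X `&` Y)) + phi n (hmap n @^-1` (X `|` Y)) <=
    phi n (hmap n @^-1` X) + phi n (hmap n @^-1` Y)).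
  by rewrite preimage_setI preimage_setU; apply: hs; exact: hmap_borel.
- move=> X _; apply/andP; split.
    apply: (ler_cvg_to (cvg_cst (0:R)) (phi0_cvg X)).
    by apply: filterE => n; case/andP: (seqof_01 X n).
  apply: (ler_cvg_to (phi0_cvg X) (cvg_cst (1:R))).
  by apply: filterE => n; case/andP: (seqof_01 X n).
Qed.

Definition dec (r : Rbs R) : seq nat :=
  match pselect (exists s : seq nat, r = (pickle s)%:R) with
  | left h => projT1 (cid h)
  | right _ => [::] end.

Lemma dec_pickle s : dec (pickle s)%:R = s.
Proof.
rewrite /dec; case: pselect => [h|nh]; last by exfalso; apply: nh; exists s.
case: (cid h) => s' /= /eqP; rewrite eqr_nat => /eqP /(pcan_inj pickleK) ->.
by [].
Qed.

Lemma borel_set1 (r : Rbs R) : borel [set r].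
Proof.
rewrite -[[set r]]setCK; apply: borelC; apply: borel_open; apply: closed_openC.
exact: (accessible_closed_set1 (hausdorff_accessible (@Rhausdorff R))).
Qed.

Definition Nset : set (Rbs R) := range (fun s : seq nat => (pickle s)%:R).

Lemma borel_Nset : borel Nset.
Proof.
have -> : Nset = \bigcup_j [set ((pickle (odflt [::] (unpickle j : option (seq nat))))%:R : Rbs R)].
  apply/seteqP; split => [_ [s _ <-]|r [j _ ->]]; last by eexists.
  by exists (pickle s) => //; rewrite pickleK.
by apply: borel_bigcup => j; exact: borel_set1.
Qed.

Lemma dec_fib : fib_borel dec.
Proof.
move=> s.
have -> : dec @^-1` [set s] =
   [set ((pickle s)%:R : Rbs R)] `|` (if s == [::] then ~` Nset else set0).
  apply/seteqP; split => r /=.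
    rewrite /dec; case: pselect => [h|nh].
      case: (cid h) => s' /= -> ->; by left.
    move=> <-; right => /=; by move=> [s' _ rs]; apply: nh; exists s'.
  case=> [->|]; first exact: dec_pickle.
  case: eqP => [-> nr|//]; rewrite /dec; case: pselect => // -[s' rs].
  by exfalso; apply: nr; exists s'.
apply: borelU; first exact: borel_set1.
case: eqP => _; [apply: borelC; exact: borel_Nset|exact: borel0].
Qed.

Definition Ft (k t : nat) (r : Rbs R) : 'I_k.+1 := inord (nth 0%N (dec r) t).

Lemma Ft_fib k t : fib_borel (Ft k t).
Proof. exact: (fib_borel_comp _ (fun s => (inord (nth 0%N s t) : 'I_k.+1)) dec_fib). Qed.

Lemma Ft_hmap k t n x : (t < n)%N -> Ft k t (hmap n x) = inord (lab n t x).
Proof.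
move=> tn; rewrite /Ft /hmap dec_pickle /code (nth_map 0%N) ?size_iota //.
by rewrite nth_iota // add0n.
Qed.

Lemma Ft_tg k m e n : (tg k m e < n)%N -> Ft k (tg k m e) \o hmap n = Pn n k m e.
Proof.
move=> tn; apply/funext => x /=; rewrite Ft_hmap // lab_tg.
exact: inord_val.
Qed.

Lemma closeq_le k (e1 e2 : R) (x y : {set 'I_k} -> R) : e1 <= e2 -> closeq e1 x y -> closeq e2 x y.
Proof. by move=> le h A; apply: le_trans (h A) le. Qed.

Lemma grid' k m (x : {set 'I_k.+1} -> R) : (forall A, 0 <= x A <= 1) ->
  exists e, closeq (dlt m) x (yv k.+1 m e).
Proof. exact: grid. Qed.

Lemma part_a k m : U [set n | forall x, Qk phi0 k.+1 x ->
   exists2 z, Qk (phi n) k.+1 z & closeq (dlt m + (dlt m + dlt m)) x z].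
Proof.
pose W e := [set n | (exists2 x, Qk phi0 k.+1 x & closeq (dlt m) x (yv k.+1 m e)) ->
   exists2 z, Qk (phi n) k.+1 z & closeq (dlt m + dlt m) z (yv k.+1 m e)].
have hW : forall e, U (W e).
  move=> e; case: (pselect (exists2 x, Qk phi0 k.+1 x & closeq (dlt m) x (yv k.+1 m e)))
     => [[x [F hF <-] cx]|nx]; last by apply: filterE => n /nx.
  have dm : 0 < dlt m by rewrite invr_gt0 ltr0n.
  have hA : forall A : {set 'I_k.+1}, \forall n \near U,
      `|quotient_of phi0 F A - quotient_of (phi n) (F \o hmap n) A| < dlt m.
    move=> A; exact: (cvgrPdist_lt _ _).1 (phi0_cvg _) _ dm.
  apply: filterS (@filter_forall _ _ _ U _ hA) => n hn _.
  exists (quotient_of (phi n) (F \o hmap n)); first by exists (F \o hmap n) => //; exact: hmap_fib.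
  apply: close_trans cx; apply: close_sym => A; exact: ltW.
apply: filterS (@filter_forall _ _ _ U _ hW) => n hn x Qx.
have [e cx] := @grid' k m x (Qk_01 _ phi0_ins _ _ Qx).
have [z Qz cz] := hn e (ex_intro2 _ _ x Qx cx).
by exists z => //; apply: close_trans cx (close_sym cz).
Qed.

Lemma near_gt (N : nat) : U [set n | (N < n)%N].
Proof. by apply: hUoo; exists N.+1. Qed.

Lemma part_b k m : U [set n | forall z, Qk (phi n) k.+1 z ->
   exists2 x, Qk phi0 k.+1 x & closeq (dlt m + dlt m) z x].
Proof.
pose V e := [set n | exists2 z, Qk (phi n) k.+1 z & closeq (dlt m) z (yv k.+1 m e)].
pose W e := [set n | (U (V e) -> exists2 x, Qk phi0 k.+1 x & closeq (dlt m) x (yv k.+1 m e))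
   /\ (~ U (V e) -> ~ V e n)].
have hW : forall e, U (W e).
  move=> e; case: (pselect (U (V e))) => [hV|nV]; last first.
    have [//|hC] := in_ultra_setVsetC (V e) hU.
    by apply: filterS hC => n hn; split.
  apply: filterE => n0; split => // _.
  set F := Ft k (tg k m e).
  exists (quotient_of phi0 F); first by exists F => //; exact: Ft_fib.
  move=> A.
  have hc := phi0_cvg (F @^-1` [set i | i \in A]).
  have hc2 : (fun n => `|seqof (F @^-1` [set i | i \in A]) n - yv k.+1 m e A|) @ U -->
     `|phi0 (F @^-1` [set i | i \in A]) - yv k.+1 m e A|.
    by apply: cvg_norm; apply: cvgB => //; exact: cvg_cst.
  apply: (ler_cvg_to hc2 (cvg_cst (dlt m))).
  apply: filterS (filterI hV (near_gt (tg k m e))) => n [[z [G hG <-] cz] tn] /=.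
  have gG : good n k m e G by split.
  have [_ cP] := Pn_good n k m e (ex_intro _ G gG).
  have := cP A; rewrite /quotient_of -(Ft_tg k m e n tn) => h; exact h.
apply: filterS (@filter_forall _ _ _ U _ hW) => n hn z Qz.
have [e cz] := @grid' k m z (Qk_01 _ (hphi n) _ _ Qz).
have [hV _] := hn e.
case: (pselect (U (V e))) => [/hV [x Qx cx]|nV].
  by exists x => //; apply: close_trans cz (close_sym cx).
by exfalso; apply: ((hn e).2 nV); exists z.
Qed.

Lemma Qk_pt {J0 : borel_space R} (ps : setfun J0) k : Qk ps k.+1 (quotient_of ps (fun _ => ord0)).
Proof. by exists (fun _ => ord0) => //; exact: (fib_borel_cst ord0). Qed.

Lemma dH_triv n k : dH (Qk (phi n) k.+1) (Qk phi0 k.+1) <= Num.sqrt (2 ^ k.+1)%:R * 1.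
Proof.
have c1 : forall x y : {set 'I_k.+1} -> R, (forall A, 0 <= x A <= 1) ->
    (forall A, 0 <= y A <= 1) -> closeq 1 x y.
  move=> x y hx hy A; have /andP[? ?] := hx A; have /andP[? ?] := hy A.
  by rewrite ler_norml; apply/andP; split; lra.
apply: dH_le => // [x Qx|y Qy].
  exists (quotient_of phi0 (fun _ => ord0)); first exact: Qk_pt.
  by apply: c1; [exact: (Qk_01 _ (hphi n) _ _ Qx)|exact: (Qk_01 _ phi0_ins _ _ (Qk_pt _ _))].
exists (quotient_of (phi n) (fun _ => ord0)); first exact: Qk_pt.
by apply: c1; [exact: (Qk_01 _ phi0_ins _ _ Qy)|exact: (Qk_01 _ (hphi n) _ _ (Qk_pt _ _))].
Qed.

Lemma a_le n k : (0 < k)%N -> (2 ^- k : R) * dH (Qk (phi n) k) (Qk phi0 k) <= (3/2/2) ^+ k.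
Proof.
case: k => // k _; apply: le_trans (term_le (3/2) k.+1 _ _); [|lra|rewrite expr2; lra].
apply: ler_wpM2l; first by rewrite invr_ge0 exprn_ge0 // ler0n.
by have := dH_triv n k; rewrite mulr1.
Qed.

Lemma dist_ge0 n : 0 <= dist_sf (phi n) phi0.
Proof.
have hk : forall k, (0 < k)%N ->
    (2 ^- k : R) * dH (Qk (phi n) k) (Qk phi0 k) <= 1 * (7/8)^+k.
  move=> k k0; apply: le_trans (a_le n k k0) _; rewrite mul1r.
  by apply: lerXn2r; rewrite ?nnegrE; lra.
by case/andP: (dist_le _ _ _ ler01 hk).
Qed.

Lemma dH_U k m : U [set n | dH (Qk (phi n) k.+1) (Qk phi0 k.+1) <=
  Num.sqrt (2 ^ k.+1)%:R * (dlt m + (dlt m + dlt m))].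
Proof.
have d0 : 0 <= dlt m by rewrite invr_ge0 ler0n.
apply: filterS (filterI (part_a k m) (part_b k m)) => n [ha hb].
apply: dH_le => [|z Qz|x Qx]; first lra.
  have [x Qx cx] := hb z Qz; exists x => //; apply: closeq_le cx; lra.
exact: ha.
Qed.

Lemma dist_small eps : 0 < eps -> U [set n | dist_sf (phi n) phi0 <= eps].
Proof.
move=> e0.
have h67 : `|(6/7 : R)| < 1 by rewrite ger0_norm; lra.
have /cvgrPdist_le /(_ (eps/16)) := cvg_expr h67.
move=> /(_ ltac:(lra)) [K _ hK].
have hK' : (6/7 : R) ^+ K <= eps/16.
  by have := hK K (leqnn K); rewrite /= sub0r normrN ger0_norm // exprn_ge0 //; lra.
pose c : R := Num.sqrt (2 ^ K)%:R.
have c0 : 0 <= c by apply: sqrtr_ge0.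
set m := Num.trunc (48 * c / eps).
have hm : 48 * c / eps < m.+1%:R.
  by have /andP[] := truncn_itv (divr_ge0 (mulr_ge0 (ler0n _ 48) c0) (ltW e0)).
set M : R := m.+1%:R.
have M0 : 0 < M by rewrite ltr0n.
set eta := dlt m + (dlt m + dlt m).
have d0 : 0 <= dlt m by rewrite invr_ge0 ler0n.
have eta0 : 0 <= eta by rewrite /eta; lra.
have ceta : c * eta <= eps / 16.
  have -> : c * eta = (3 * c) / M by rewrite /eta /dlt -/M; field; rewrite gt_eqF.
  rewrite ler_pdivrMr //.
  move: hm; rewrite ltr_pdivrMr // => hm; lra.
apply: filterS (@filter_forall _ 'I_K _ U _ (fun k : 'I_K => dH_U k m)) => n hn.
set C := c * eta + (6/7) ^+ K.
have C0 : 0 <= C by rewrite /C addr_ge0 ?mulr_ge0 ?exprn_ge0 //; lra.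
have hk : forall l, (0 < l)%N ->
    (2 ^- l : R) * dH (Qk (phi n) l) (Qk phi0 l) <= C * (7/8)^+l.
  move=> l l0; have i0 : 0 <= (2 ^- l : R) by rewrite invr_ge0 exprn_ge0 // ler0n.
  case: (leqP l K) => lK.
    case: l l0 lK i0 => // l _ lK i0.
    have := hn (Ordinal lK) => /= hd.
    apply: (le_trans (y := 2 ^- l.+1 * (c * eta))).
      apply: ler_wpM2l => //; apply: le_trans hd _; apply: ler_wpM2r => //.
      by apply: ler_wsqrtr; rewrite ler_nat leq_exp2l.
    apply: (le_trans (y := (7/8)^+l.+1 * (c * eta))).
      apply: ler_wpM2r; first by rewrite mulr_ge0.
      by rewrite -exprVn; apply: lerXn2r; rewrite ?nnegrE; lra.
    rewrite mulrC; apply: ler_wpM2r; first by rewrite exprn_ge0 //; lra.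
    by rewrite /C lerDl exprn_ge0 //; lra.
  apply: le_trans (a_le n l l0) _.
  have -> : (3/2/2 : R) = 6/7 * (7/8) by lra.
  rewrite exprMn; apply: ler_wpM2r; first by rewrite exprn_ge0 //; lra.
  apply: (le_trans (y := (6/7) ^+ K)); last by rewrite /C lerDr mulr_ge0.
  by apply: ler_wiXn2l; [lra|lra|exact: ltnW].
have /andP[_ hd] := dist_le _ _ _ C0 hk.
apply: le_trans hd _; rewrite /C; lra.
Qed.

End Main.


Theorem corollary3p11 (R : realType)
    (J : nat -> borel_space R) (phi : forall n, setfun (J n))
    (hphi : forall n, inc_norm_submod (phi n)) :
  exists (J0 : borel_space R) (phi0 : setfun J0),
    inc_norm_submod phi0 /\
    exists sigma : nat -> nat,
      (forall n, (sigma n < sigma n.+1)%N) /\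
      (fun n => dist_sf (phi (sigma n)) phi0) @ \oo --> (0 : R).
Proof.
have [U [hU hsub]] := @ultraFilterLemma nat \oo eventually_filter.
have FU : ProperFilter U := @ultra_proper _ _ hU.
exists (Rbs R), (phi0 J phi U); split; first exact: (@phi0_ins R J phi hphi U hU).
have hpick : forall p : nat * nat, exists n, (p.1 < n)%N /\
    dist_sf (phi n) (phi0 J phi U) <= p.2.+1%:R^-1.
  move=> [N j] /=.
  have jp : (0:R) < j.+1%:R^-1 by rewrite invr_gt0 ltr0n.
  have hI : U ([set n | dist_sf (phi n) (phi0 J phi U) <= j.+1%:R^-1] `&` [set n | (N < n)%N]).
    apply: filterI; first exact: (@dist_small R J phi hphi U hU hsub (j.+1%:R^-1) jp).
    exact: (@near_gt U hsub N).
  by case: (@filter_ex _ U FU _ hI) => n [h1 h2]; exists n.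
have [f hf] := choice hpick.
pose sg := fix sg (j : nat) : nat := match j with 0 => f (0, 0)%N | j'.+1 => f (sg j', j'.+1) end.
have hsg : forall j, dist_sf (phi (sg j)) (phi0 J phi U) <= j.+1%:R^-1.
  by case=> [|j]; [exact: (hf (0, 0)%N).2|exact: (hf (sg j, j.+1)).2].
exists sg; split; first by move=> j; exact: (hf (sg j, j.+1)).1.
apply/cvgrPdist_le => e e0.
have e1 : 0 <= e^-1 by rewrite invr_ge0 ltW.
have /andP[_ hN] := truncn_itv e1.
exists (Num.trunc e^-1) => // j /= hj.
rewrite sub0r normrN ger0_norm; last exact: (dist_ge0 J phi hphi U (sg j)).
apply: le_trans (hsg j) _.
rewrite -[e]invrK lef_pV2 ?posrE ?invr_gt0 ?ltr0n //.
apply: ltW; apply: lt_le_trans hN _; rewrite ler_nat; exact: hj.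
Qed.
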